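(* Let $G$ be a graph on $d+2$ vertices, $k>1$, and $\overline{B_G} = \frac{1}{k^2-1}(B_G(k) + J) = \frac{1}{k^2-1} I - A_G$. Then $G$ has a spherical representation in $\mathbb{R}^d$ with distance ratio $k$ if and only if all of the following hold: (i) $w^T \overline{B_G} w \geq 0$ for all $w \in \mathbf{1}^{\perp}$; (ii) there exist a nonzero $w \in \mathbf{1}^{\perp}$ and a real $\gamma$ with $\overline{B_G} w = \gamma \mathbf{1}$; (iii) $\det(\overline{B_G}) = 0$; (iv) there exists $r_0 \in \mathbb{R}$ such that $rJ + \overline{B_G}$ is positive semidefinite for all $r \geq r_0$.
   Context: Graphs are finite and simple with vertices labeled $1,\dots,d+2$; $A_G$ is the adjacency matrix. A finite set $S\subset\mathbb{R}^d$ is a 2-distance set if $\{\|p-q\| : p,q\in S, p\neq q\}$ has exactly two elements $\alpha_1>\alpha_2$; its distance ratio is $k=\alpha_1/\alpha_2$; its associated graph has vertex set $S$ with $p,q$ adjacent iff $\|p-q\|=\alpha_1$. $G$ has a spherical representation in $\mathbb{R}^d$ with ratio $k$ if some 2-distance set in $\mathbb{R}^d$ with ratio $k$, lying on a $(d-1)$-dimensional sphere, has associated graph $G$. $B_G(k)$ is the matrix with $b_{ii}=0$, $b_{ij}=-1$ for non-adjacent $i\neq j$, $b_{ij}=-k^2$ for adjacent $i,j$. $J$ is the all-ones matrix, $\mathbf{1}$ the all-ones vector, $\mathbf{1}^\perp$ its orthogonal complement. *)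

(* Defs.v *)
From HB Require Import structures.
From mathcomp Require Import all_boot all_order all_algebra.
From mathcomp Require Import reals.
Set Implicit Arguments. Unset Strict Implicit. Unset Printing Implicit Defensive.
Import Order.TTheory GRing.Theory Num.Theory.
Local Open Scope ring_scope.

Section Defs.
Variable R : realType.

Definition edist (d : nat) (p q : 'rV[R]_d) : R :=
  Num.sqrt (\sum_(i < d) (p 0 i - q 0 i) ^+ 2).

Definition on_sphere (d n : nat) (p : 'I_n -> 'rV[R]_d) : Prop :=
  exists (c : 'rV[R]_d) (rho : R), 0 < rho /\ forall i, edist (p i) c = rho.

(* The labeled point family p (S = image of p, |S| = n) is a 2-distance set
   whose distance set is exactly {a1, a2} with a1 > a2. *)
Definition two_distance (d n : nat) (p : 'I_n -> 'rV[R]_d) (a1 a2 : R) : Prop :=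
  [/\ injective p, a2 < a1,
      (forall i j, i != j -> edist (p i) (p j) = a1 \/ edist (p i) (p j) = a2),
      (exists i j, i != j /\ edist (p i) (p j) = a1) &
      (exists i j, i != j /\ edist (p i) (p j) = a2)].

Definition spherical_rep (d : nat) (G : rel 'I_(d.+2)) (k : R) : Prop :=
  exists (p : 'I_(d.+2) -> 'rV[R]_d) (a1 a2 : R),
    [/\ two_distance p a1 a2, a1 / a2 = k, on_sphere p &
        (forall i j, i != j -> (G i j <-> edist (p i) (p j) = a1))].

Definition adjmx (n : nat) (G : rel 'I_n) : 'M[R]_n :=
  \matrix_(i, j) (G i j)%:R.

Definition Bmx (n : nat) (G : rel 'I_n) (k : R) : 'M[R]_n :=
  \matrix_(i, j) (if i == j then 0 else if G i j then - k ^+ 2 else -1).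

Definition Jmx (n : nat) : 'M[R]_n := const_mx 1.
Definition ones (n : nat) : 'cV[R]_n := const_mx 1.

Definition Bbar (n : nat) (G : rel 'I_n) (k : R) : 'M[R]_n :=
  (k ^+ 2 - 1)^-1 *: (Bmx G k + Jmx n).

Definition perp1 (n : nat) (w : 'cV[R]_n) : Prop := (ones n)^T *m w = 0.

Definition qform (n : nat) (M : 'M[R]_n) (w : 'cV[R]_n) : R := (w^T *m M *m w) 0 0.

Definition psd (n : nat) (M : 'M[R]_n) : Prop :=
  M^T = M /\ forall x : 'cV[R]_n, 0 <= qform M x.

End Defs.

(* Main.v *)
Require Import Defs.
From HB Require Import structures.
From mathcomp Require Import all_boot all_order all_algebra.
From mathcomp Require Import reals.
From mathcomp Require Import ring lra zify.
From Stdlib Require Import Classical.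
Import Order.TTheory GRing.Theory Num.Theory.
Set Implicit Arguments. Unset Strict Implicit. Unset Printing Implicit Defensive.
Local Open Scope ring_scope.

Section Helpers.
Variable R : realType.

Definition bil n (M : 'M[R]_n) (x y : 'cV[R]_n) : R := (x^T *m M *m y) 0 0.

Lemma qform_bil n (M : 'M[R]_n) x : qform M x = bil M x x.
Proof. by []. Qed.

Lemma bilDl n (M : 'M[R]_n) x y z : bil M (x + y) z = bil M x z + bil M y z.
Proof. by rewrite /bil linearD /= !mulmxDl mxE. Qed.

Lemma bilDr n (M : 'M[R]_n) x y z : bil M z (x + y) = bil M z x + bil M z y.
Proof. by rewrite /bil mulmxDr mxE. Qed.

Lemma bilZl n (M : 'M[R]_n) a x z : bil M (a *: x) z = a * bil M x z.
Proof. by rewrite /bil linearZ /= -!scalemxAl mxE. Qed.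

Lemma bilZr n (M : 'M[R]_n) a x z : bil M z (a *: x) = a * bil M z x.
Proof. by rewrite /bil -!scalemxAr mxE. Qed.

Lemma bilNl n (M : 'M[R]_n) x z : bil M (- x) z = - bil M x z.
Proof. by rewrite -scaleN1r bilZl mulN1r. Qed.

Lemma bilNr n (M : 'M[R]_n) x z : bil M z (- x) = - bil M z x.
Proof. by rewrite -scaleN1r bilZr mulN1r. Qed.

Lemma bilC n (M : 'M[R]_n) x y : M^T = M -> bil M x y = bil M y x.
Proof.
move=> sM; rewrite /bil -[in RHS](trmxK x) -{2}sM -!trmx_mul mulmxA.
by rewrite [in RHS]mxE.
Qed.

Lemma bilMD n (A B : 'M[R]_n) x y : bil (A + B) x y = bil A x y + bil B x y.
Proof. by rewrite /bil mulmxDr mulmxDl mxE. Qed.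

Lemma bilMZ n (A : 'M[R]_n) a x y : bil (a *: A) x y = a * bil A x y.
Proof. by rewrite /bil -scalemxAr -scalemxAl mxE. Qed.

Lemma sumsq_ge0 n (v : 'cV[R]_n) : 0 <= (v^T *m v) 0 0.
Proof.
rewrite mxE; apply: sumr_ge0 => i _; rewrite mxE -expr2; exact: sqr_ge0.
Qed.

Lemma sumsq_eq0 n (v : 'cV[R]_n) : (v^T *m v) 0 0 = 0 -> v = 0.
Proof.
rewrite mxE => /eqP; rewrite psumr_eq0; last by move=> i _; rewrite mxE -expr2 sqr_ge0.
move=> /allP H; apply/matrixP => i j; rewrite (ord1 j) mxE.
have := H i (mem_index_enum _); rewrite mxE -expr2 sqrf_eq0 => /eqP //.
Qed.

Lemma bil_gram m n (X : 'M[R]_(n, m)) x : bil (X *m X^T) x x = ((X^T *m x)^T *m (X^T *m x)) 0 0.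
Proof. by rewrite /bil trmx_mul trmxK !mulmxA. Qed.

Lemma qform_gram_ge0 m n (X : 'M[R]_(n, m)) x : 0 <= qform (X *m X^T) x.
Proof. by rewrite qform_bil bil_gram sumsq_ge0. Qed.

Lemma JmxE n : Jmx R n = ones R n *m (ones R n)^T.
Proof.
rewrite /Jmx /ones; apply/matrixP => i j; rewrite !mxE big_ord1 !mxE mulr1 //.
Qed.

Lemma qformJ n (x : 'cV[R]_n) : qform (Jmx R n) x = ((ones R n)^T *m x) 0 0 ^+ 2.
Proof.
rewrite qform_bil /bil JmxE mulmxA -mulmxA.
have -> : x^T *m ones R n = ((ones R n)^T *m x)^T by rewrite trmx_mul trmxK.
by rewrite expr2 mxE big_ord1 mxE.
Qed.

Lemma trJ n : (Jmx R n)^T = Jmx R n.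
Proof. exact: trmx_const. Qed.

Lemma arith_aux (N Q : R) : 0 <= N -> 0 <= Q ->
  0 <= 0 + - (N / (Q + 1)) * N + (- (N / (Q + 1)) * N + - (N / (Q + 1)) * (- (N / (Q + 1)) * Q)) ->
  N = 0.
Proof.
move=> N0 Q0 H.
have Q1 : 0 < Q + 1 by lra.
set t := N / (Q + 1) in H.
have key : (0 + -t*N + (-t*N + -t*(-t*Q))) * (Q+1)^+2 = - (N*N*(Q+2)).
  by rewrite /t; field; lra.
have HH : 0 <= - (N*N*(Q+2)) by rewrite -key; apply: mulr_ge0 => //; exact: sqr_ge0.
nra.
Qed.

Lemma psd_ker n (M : 'M[R]_n) x : M^T = M -> (forall y, 0 <= qform M y) ->
  qform M x = 0 -> M *m x = 0.
Proof.
move=> sM pM qx; set y := M *m x.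
set N : R := (y^T *m y) 0 0. set Q := qform M y.
have hN : bil M y x = N by rewrite /bil /N /y trmx_mul sM mulmxA.
have hN' : bil M x y = N by rewrite bilC.
have N0 : 0 <= N by apply: sumsq_ge0.
have Q0 : 0 <= Q by apply: pM.
have := pM (x + (- (N / (Q + 1))) *: y).
rewrite qform_bil bilDl !bilDr !bilZl !bilZr -!qform_bil qx hN hN' -/Q => H.
by apply: sumsq_eq0; apply: arith_aux H.
Qed.

Lemma qform_block n (a t : R) (q x : 'cV[R]_n) (P' : 'M[R]_n) :
  qform (block_mx a%:M q^T q P' : 'M_(1 + n)) (col_mx t%:M x) =
  a * t^+2 + 2 * t * (q^T *m x) 0 0 + qform P' x.
Proof.
rewrite /qform tr_col_mx tr_scalar_mx mul_row_block mul_row_col.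
rewrite !mulmxDl !mul_scalar_mx !mxE !big_ord1 !mxE /= !mulr1n.
set s1 := \sum_j _. set s2 := \sum_j _.
set s3 := \sum_j _. set s4 := \sum_j _.
have -> : s1 = s4.
  by rewrite /s1 /s4; apply: eq_bigr => j _; rewrite !mxE mulrC.
have -> : s2 = t * s4.
  by rewrite /s2 /s4 mulr_sumr; apply: eq_bigr => j _; rewrite !mxE mulrA.
ring.
Qed.

Lemma qformB n (A B : 'M[R]_n) c x : qform (A - c *: B) x = qform A x - c * qform B x.
Proof. by rewrite !qform_bil -scaleNr bilMD bilMZ mulNr. Qed.

Lemma qform_rank1 n (q x : 'cV[R]_n) : qform (q *m q^T) x = ((q^T *m x) 0 0) ^+ 2.
Proof. by rewrite qform_bil bil_gram expr2 mxE big_ord1 mxE. Qed.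

Lemma arith_a0 (Q s : R) : s != 0 ->
  0 <= 0 * (- (Q + 1) / (2 * s)) ^+ 2 + 2 * (- (Q + 1) / (2 * s)) * s + Q -> False.
Proof.
move=> s0 H.
have E : 0 * (- (Q + 1) / (2 * s)) ^+ 2 + 2 * (- (Q + 1) / (2 * s)) * s + Q = -1.
  by field.
by move: H; rewrite E; lra.
Qed.

Lemma factor n (P : 'M[R]_n) : P^T = P -> (forall x, 0 <= qform P x) ->
  forall m, (\rank P <= m)%N -> exists X : 'M[R]_(n, m), P = X *m X^T.
Proof.
move: P; elim: n => [|n IH].
  by move=> P _ _ m _; exists 0; apply/matrixP => -[].
rewrite -[n.+1]/(1 + n)%N => P sP pP m rP.
set a : R := (ulsubmx P) 0 0.
set q := dlsubmx P.
set P' := drsubmx P.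
have PE : P = block_mx a%:M q^T q P'.
  have E1 : ulsubmx P = a%:M by exact: mx11_scalar.
  have E2 : ursubmx P = q^T by rewrite /q trmx_dlsub sP.
  by rewrite -{1}(submxK P) E1 E2.
have sP' : P'^T = P' by rewrite /P' trmx_drsub sP.
have pB : forall t x, 0 <= a * t^+2 + 2 * t * (q^T *m x) 0 0 + qform P' x.
  by move=> t x; rewrite -qform_block -PE.
have pP' : forall x, 0 <= qform P' x.
  by move=> x; have := pB 0 x; rewrite expr2 !mulr0 !mul0r; lra.
have a0 : 0 <= a by have := pB 1 0; rewrite /qform !mulmx0 !mxE expr1n; lra.
case: (eqVneq a 0) => [aeq0|aneq0].
  have q0 : q = 0.
    apply: sumsq_eq0; apply/eqP; apply/contraT => s0; exfalso.
    apply: (@arith_a0 (qform P' q) _ s0).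
    by have := pB (- (qform P' q + 1) / (2 * (q^T *m q) 0 0)) q; rewrite aeq0.
  have PE' : P = block_mx (0 : 'M_1) 0 0 P' by rewrite PE aeq0 q0 trmx0 raddf0.
  have [X' HX'] : exists X' : 'M[R]_(n, m), P' = X' *m X'^T.
    apply: IH => //; have := rank_diag_block_mx (0 : 'M[R]_1) P'.
    by rewrite mxrank0 add0n -PE' => <-.
  exists (col_mx (0 : 'M_(1, m)) X').
  by rewrite PE' tr_col_mx mul_col_row !mul0mx trmx0 mulmx0 -HX'.
have apos : 0 < a by rewrite lt_def aneq0 a0.
set S := P' - a^-1 *: (q *m q^T).
have sS : S^T = S by rewrite /S linearB /= linearZ /= trmx_mul trmxK sP'.
have pS : forall x, 0 <= qform S x.
  move=> x; have := pB (- a^-1 * (q^T *m x) 0 0) x.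
  rewrite /S qformB qform_rank1.
  set s := (q^T *m x) 0 0; set Q := qform P' x.
  have -> : a * (- a^-1 * s)^+2 + 2 * (- a^-1 * s) * s + Q = Q - a^-1 * s^+2.
    by field; rewrite lt0r_neq0.
  by [].
have rPS : \rank P = (1 + \rank S)%N.
  set L : 'M[R]_(1+n) := block_mx 1%:M 0 (a^-1 *: q) 1%:M.
  have PL : P = L *m block_mx a%:M 0 0 S *m L^T.
    rewrite /L tr_block_mx !trmx1 trmx0 !mulmx_block.
    rewrite !mul1mx !mulmx1 !mul0mx !mulmx0 !addr0 !add0r.
    rewrite mul_scalar_mx mul_mx_scalar linearZ /= scalerA mulfV // scale1r.
    rewrite scalerA mulfV // scale1r -scalemxAr /S addrC subrK.
    exact: PE.
  have uL : L \in unitmx by rewrite unitmxE /L det_lblock !det1 mulr1 unitr1.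
  rewrite PL mxrankMfree ?row_free_unit ?unitmx_tr //.
  rewrite -mxrank_tr trmx_mul mxrankMfree ?row_free_unit ?unitmx_tr // mxrank_tr.
  have nz : (a%:M : 'M[R]_1) != 0.
    apply/eqP => /matrixP /(_ 0 0); rewrite !mxE /= mulr1n => /eqP.
    by rewrite (negPf aneq0).
  by rewrite rank_diag_block_mx rank_rV nz.
case: m rP => [|m'] rP.
  by rewrite rPS in rP.
have [Y HY] : exists Y : 'M[R]_(n, m'), S = Y *m Y^T.
  by apply: IH => //; rewrite rPS in rP.
rewrite -[m'.+1]/(1 + m')%N.
exists (block_mx (Num.sqrt a)%:M 0 ((Num.sqrt a)^-1 *: q) Y).
have sa0 : Num.sqrt a != 0 by rewrite sqrtr_eq0 -ltNge.
rewrite tr_block_mx mulmx_block !tr_scalar_mx !trmx0 !mul0mx !mulmx0 !addr0 ?add0r.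
rewrite -scalar_mxM -expr2 sqr_sqrtr ?ltW // linearZ /= mul_scalar_mx mul_mx_scalar.
rewrite !scalerA mulfV // scale1r -scalemxAl -scalemxAr scalerA.
rewrite -invfM -expr2 sqr_sqrtr ?ltW // -HY /S addrC subrK.
by rewrite scale1r; exact: PE.
Qed.

Lemma fredholm n (A : 'M[R]_n) (b : 'cV[R]_n) : A^T = A ->
  (forall v : 'cV[R]_n, A *m v = 0 -> b^T *m v = 0) -> exists z : 'cV[R]_n, A *m z = b.
Proof.
move=> sA H.
have : (b^T <= A)%MS.
  rewrite submxE; apply/eqP/matrixP => i j; rewrite (ord1 i).
  have hc : A *m col j (cokermx A) = 0.
    apply/matrixP => u c; rewrite (ord1 c).
    have E := congr1 (fun M : 'M[R]_n => M u j) (mulmx_coker A).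
    rewrite /= !mxE in E; rewrite !mxE -[X in _ = X]E.
    by apply: eq_bigr => l _; rewrite !mxE.
  have E := congr1 (fun M : 'M[R]_1 => M 0 0) (H _ hc).
  rewrite /= !mxE in E; rewrite !mxE -[X in _ = X]E.
  by apply: eq_bigr => l _; rewrite !mxE.
case/submxP => D HD; exists D^T.
by rewrite -[A]sA -trmx_mul -HD trmxK.
Qed.

Lemma det0_ker n (A : 'M[R]_n) (w : 'cV[R]_n) : A *m w = 0 -> w != 0 -> \det A = 0.
Proof.
move=> Aw; apply: contraNeq => dA.
have uA : A \in unitmx by rewrite unitmxE unitfE.
by rewrite -(mulKmx uA w) Aw mulmx0.
Qed.

Lemma BbarE n (G : rel 'I_n) (k : R) i j : k ^+ 2 != 1 ->
  Bbar G k i j = if i == j then (k ^+ 2 - 1)^-1 else - (G i j)%:R.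
Proof.
move=> k1; have k1' : k ^+ 2 - 1 != 0 by rewrite subr_eq0.
rewrite /Bbar /Bmx /Jmx !mxE; case: eqP => _; first by rewrite add0r mulr1.
by case: (G i j) => /=; [field | rewrite addNr mulr0 oppr0].
Qed.

Lemma Bbar_sym n (G : rel 'I_n) (k : R) : symmetric G -> (Bbar G k)^T = Bbar G k.
Proof.
move=> Gs; apply/matrixP => i j; rewrite /Bbar /Bmx /Jmx !mxE eq_sym Gs //.
Qed.

Lemma sqdist_gram m n (X : 'M[R]_(n, m)) i j :
  \sum_l (X i l - X j l) ^+ 2 = (X *m X^T) i i + (X *m X^T) j j - 2 * (X *m X^T) i j.
Proof.
rewrite !mxE mulr_sumr -sumrN -!big_split /=; apply: eq_bigr => l _; rewrite !mxE; ring.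
Qed.

Lemma qformDZ n (A B : 'M[R]_n) r x : qform (r *: A + B) x = r * qform A x + qform B x.
Proof. by rewrite !qform_bil bilMD bilMZ. Qed.

Lemma bil_delta n (P : 'M[R]_n) i j : bil P (delta_mx i (0 : 'I_1)) (delta_mx j (0 : 'I_1)) = P i j.
Proof.
rewrite /bil trmx_delta -rowE -colE !mxE //.
Qed.

Lemma mul_delta n (P : 'M[R]_n) i j : (P *m delta_mx i (0 : 'I_1)) j 0 = P j i.
Proof. by rewrite -colE mxE. Qed.

Lemma Jmul0 n (w : 'cV[R]_n) : (ones R n)^T *m w = 0 -> Jmx R n *m w = 0.
Proof. by move=> H; rewrite JmxE -mulmxA H mulmx0. Qed.

Lemma entry11 (A : 'M[R]_1) : A 0 0 = 0 -> A = 0.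
Proof. by move=> H; apply/matrixP => i j; rewrite !ord1 H mxE. Qed.

Lemma trmx11 (A : 'M[R]_1) : A^T = A.
Proof. by apply/matrixP => i j; rewrite !ord1 mxE. Qed.

Lemma trmx11_entry m (u : 'cV[R]_m) (v : 'cV[R]_m) : ((u^T *m v)^T) 0 0 = (u^T *m v) 0 0.
Proof. by rewrite mxE. Qed.

Lemma dot_lin m (u v x : 'cV[R]_m) a b :
  (u^T *m (a *: v + b *: x)) 0 0 = a * (u^T *m v) 0 0 + b * (u^T *m x) 0 0.
Proof. by rewrite mulmxDr -!scalemxAr !mxE. Qed.

Lemma dotC m (u v : 'cV[R]_m) : (u^T *m v) 0 0 = (v^T *m u) 0 0.
Proof. by rewrite !mxE; apply: eq_bigr => l _; rewrite !mxE mulrC. Qed.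

Lemma edist_self d (p : 'rV[R]_d) : edist p p = 0.
Proof. by rewrite /edist big1 ?sqrtr0 // => l _; rewrite subrr expr0n. Qed.

Lemma edist_rows d n (X : 'M[R]_(n, d)) i j :
  edist (row i X) (row j X) =
  Num.sqrt ((X *m X^T) i i + (X *m X^T) j j - 2 * (X *m X^T) i j).
Proof. by rewrite /edist -sqdist_gram; congr Num.sqrt; apply: eq_bigr => l _; rewrite !mxE. Qed.

Lemma edist_row0 d n (X : 'M[R]_(n, d)) i :
  edist (row i X) 0 = Num.sqrt ((X *m X^T) i i).
Proof.
rewrite /edist; congr Num.sqrt; rewrite mxE; apply: eq_bigr => l _.
by rewrite !mxE subr0 expr2.
Qed.

Lemma natbE (b : bool) : (b%:R : R) = if b then 1 else 0.
Proof. by case: b. Qed.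

End Helpers.

Lemma forward (R : realType) (d : nat) (G : rel 'I_(d.+2))
    (Gsym : symmetric G) (k : R) (hk : 1 < k) :
  spherical_rep G k ->
  [/\ (forall w : 'cV[R]_(d.+2), perp1 w -> 0 <= qform (Bbar G k) w),
      (exists (w : 'cV[R]_(d.+2)) (gamma : R),
          [/\ w != 0, perp1 w & Bbar G k *m w = gamma *: ones R (d.+2)]),
      \det (Bbar G k) = 0 &
      (exists r0 : R, forall r : R, r0 <= r ->
          psd (r *: Jmx R (d.+2) + Bbar G k))].
Proof.
move=> [p [a1 [a2 [[pinj a21 dist [i1 [j1 [ij1 e1]]] [i2 [j2 [ij2 e2]]]] hk' [c [rho [rho0 hc]]] Gspec]]]].
have k21 : k ^+ 2 - 1 != 0.
  by rewrite subr_eq0 gt_eqF //; nra.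
have k2 : k ^+ 2 != 1 by rewrite -subr_eq0.
have k2gt : 0 < k ^+ 2 - 1 by rewrite subr_gt0; nra.
have a2ge : 0 <= a2 by rewrite -e2 sqrtr_ge0.
have a2n0 : a2 != 0.
  by apply/eqP => a20; move: hk'; rewrite a20 invr0 mulr0 => k0; move: hk; rewrite -k0 ltr10.
have a2pos : 0 < a2 by rewrite lt_def a2n0.
have a1E : a1 = k * a2 by rewrite -hk' divfK.
pose X : 'M[R]_(d.+2, d) := \matrix_(i, l) (p i 0 l - c 0 l).
pose M := X *m X^T.
have sqE : forall i j, \sum_l (p i 0 l - p j 0 l) ^+ 2 = M i i + M j j - 2 * M i j.
  move=> i j; rewrite -sqdist_gram; apply: eq_bigr => l _; rewrite !mxE; congr (_ ^+ 2); ring.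
have sq0 : forall i j, 0 <= \sum_l (p i 0 l - p j 0 l) ^+ 2.
  by move=> i j; apply: sumr_ge0 => l _; apply: sqr_ge0.
have Mii : forall i, M i i = rho ^+ 2.
  move=> i; rewrite -(hc i) /edist sqr_sqrtr; last by apply: sumr_ge0 => l _; apply: sqr_ge0.
  rewrite /M !mxE; apply: eq_bigr => l _; rewrite !mxE expr2 //.
have edE : forall i j, edist (p i) (p j) ^+ 2 = \sum_l (p i 0 l - p j 0 l) ^+ 2.
  by move=> i j; rewrite /edist sqr_sqrtr.
have Mij : forall i j, M i j = rho ^+ 2 - (if i == j then 0 else if G i j then k ^+ 2 * a2 ^+ 2 else a2 ^+ 2) / 2.
  move=> i j; case: eqP => [->|/eqP ij]; first by rewrite Mii mul0r subr0.
  have := sqE i j; rewrite -edE !Mii.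
  have : edist (p i) (p j) = if G i j then a1 else a2.
    case Gij: (G i j).
    - by apply/(Gspec i j ij); rewrite Gij.
    - case: (dist i j ij) => // E.
      by move: (Gspec i j ij) => [_ /(_ E)]; rewrite Gij.
  move=> ->; case: (G i j) => E.
  - rewrite a1E in E.
    have H2 : 2 * M i j = rho ^+ 2 + rho ^+ 2 - (k * a2) ^+ 2 by rewrite E; ring.
    rewrite exprMn in H2; lra.
  - have H2 : 2 * M i j = rho ^+ 2 + rho ^+ 2 - a2 ^+ 2 by rewrite E; ring.
    lra.
set c0 := (k ^+ 2 - 1)^-1.
set beta := a2 ^+ 2 * (k ^+ 2 - 1) / 2.
have beta0 : 0 < beta by rewrite /beta; apply: divr_gt0 => //; apply: mulr_gt0 => //; apply: exprn_gt0.
set rs := (rho ^+ 2 - a2 ^+ 2 / 2) / beta.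
have key : rs *: Jmx R d.+2 + Bbar G k = beta^-1 *: M.
  apply/matrixP => i j; rewrite mxE BbarE // [in RHS]mxE Mij /Jmx !mxE mulr1.
  case: eqP => _; rewrite /rs /beta /c0; first by field; rewrite a2n0 k21.
  by case: (G i j) => /=; field; rewrite a2n0 k21.
have qJ0 : forall x, 0 <= qform (Jmx R d.+2) x by move=> x; rewrite qformJ sqr_ge0.
have qM0 : forall x, 0 <= qform M x by move=> x; apply: qform_gram_ge0.
have qB : forall x, qform (Bbar G k) x = beta^-1 * qform M x - rs * qform (Jmx R d.+2) x.
  move=> x; have E := congr1 (fun A => qform A x) key.
  rewrite /= qformDZ [RHS]qform_bil bilMZ -qform_bil in E.
  by rewrite -E; ring.
have sM : M^T = M by rewrite /M trmx_mul trmxK.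
have hiv : exists r0 : R, forall r : R, r0 <= r -> psd (r *: Jmx R (d.+2) + Bbar G k).
  exists rs => r hr; split.
    by rewrite linearD /= linearZ /= trJ Bbar_sym.
  move=> x; rewrite qformDZ qB.
  have -> : r * qform (Jmx R d.+2) x + (beta^-1 * qform M x - rs * qform (Jmx R d.+2) x)
     = (r - rs) * qform (Jmx R d.+2) x + beta^-1 * qform M x by ring.
  apply: addr_ge0; apply: mulr_ge0 => //; first by rewrite subr_ge0.
  by rewrite invr_ge0 ltW.
have hi : forall w : 'cV[R]_(d.+2), perp1 w -> 0 <= qform (Bbar G k) w.
  move=> w pw; rewrite qB qformJ pw mxE expr2 mulr0 mulr0 subr0.
  by apply: mulr_ge0 => //; rewrite invr_ge0 ltW.
pose K := row_mx M (ones R d.+2).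
have rK : (\rank K <= d.+1)%N.
  rewrite -mxrank_tr /K tr_row_mx -addsmxE.
  apply: leq_trans (mxrank_adds_leqif _ _).1 _.
  rewrite !mxrank_tr.
  have h1 : (\rank M <= d)%N by apply: leq_trans (mxrankM_maxl _ _) (rank_leq_col _).
  have h2 : (\rank (ones R d.+2) <= 1)%N by exact: rank_leq_col.
  lia.
have rker : (0 < \rank (kermx K))%N by rewrite mxrank_ker; lia.
have [i Hi] : exists i, row i (kermx K) != 0.
  case: (pickP (fun i => row i (kermx K) != 0)) => [i Hi|H]; first by exists i.
  move: rker; rewrite lt0n mxrank_eq0 => /eqP []; apply/row_matrixP => i.
  by move: (H i) => /negbFE /eqP ->; rewrite row0.
set v := row i (kermx K).
have vK : v *m K = 0 by rewrite /v -row_mul mulmx_ker row0.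
move: vK; rewrite /K mul_mx_row -row_mx0 => /eq_row_mx [vM v1].
set w := v^T.
have wn0 : w != 0.
  by rewrite /w; apply: contra Hi => /eqP/(congr1 trmx); rewrite trmxK trmx0 => E; apply/eqP; exact: E.
have Mw : M *m w = 0 by rewrite /w -sM -trmx_mul vM trmx0.
have pw : perp1 w by rewrite /perp1 /w -trmx_mul v1 trmx0.
have Bbar_eq : Bbar G k = beta^-1 *: M - rs *: Jmx R d.+2 by rewrite -key addrC addKr.
have Bw : Bbar G k *m w = 0.
  by rewrite Bbar_eq mulmxBl -!scalemxAl Mw (Jmul0 pw) !scaler0 subr0.
split => //.
- by exists w, 0; rewrite scale0r.
- exact: det0_ker Bw wn0.
Qed.

Lemma backward (R : realType) (d : nat) (G : rel 'I_(d.+2))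
    (Gsym : symmetric G) (k : R) (hk : 1 < k) :
  (forall w : 'cV[R]_(d.+2), perp1 w -> 0 <= qform (Bbar G k) w) ->
  (exists (w : 'cV[R]_(d.+2)) (gamma : R),
          [/\ w != 0, perp1 w & Bbar G k *m w = gamma *: ones R (d.+2)]) ->
  (exists r0 : R, forall r : R, r0 <= r ->
          psd (r *: Jmx R (d.+2) + Bbar G k)) ->
  spherical_rep G k.
Proof.
move=> hi [w [g [wn0 wp Bw]]] [r0 hr0].
have k21 : k ^+ 2 - 1 != 0 by rewrite subr_eq0 gt_eqF //; nra.
have k2 : k ^+ 2 != 1 by rewrite -subr_eq0.
have k2gt : 0 < k ^+ 2 - 1 by rewrite subr_gt0; nra.
set c0 := (k ^+ 2 - 1)^-1.
have c0pos : 0 < c0 by rewrite invr_gt0.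
set n := d.+2.
set J := Jmx R n.
set F := r0 *: J + Bbar G k.
have [sF pF] := hr0 r0 (lexx r0).
have sF' : F^T = F := sF.
have Jw : J *m w = 0 by apply: Jmul0.
have Fw : F *m w = g *: ones R n by rewrite /F mulmxDl -scalemxAl Jw scaler0 add0r.
have qFw : qform F w = 0.
  rewrite /qform -mulmxA Fw -scalemxAr mxE.
  have -> : w^T *m ones R n = ((ones R n)^T *m w)^T by rewrite trmx_mul trmxK.
  by rewrite wp trmx0 mxE mulr0.
have g0 : g = 0.
  have := psd_ker sF pF qFw; rewrite Fw => /matrixP /(_ 0 0); rewrite !mxE mulr1 //.
have Bw0 : Bbar G k *m w = 0 by rewrite Bw g0 scale0r.
have [r [y [sP pP Py y1]]] : exists r (y : 'cV[R]_n),
    [/\ (r *: J + Bbar G k)^T = r *: J + Bbar G k,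
        (forall x, 0 <= qform (r *: J + Bbar G k) x),
        (r *: J + Bbar G k) *m y = 0 &
        ((ones R n)^T *m y) 0 0 != 0].
  case: (classic (exists y : 'cV[R]_n, F *m y = 0 /\ ((ones R n)^T *m y) 0 0 != 0)).
    by move=> [y [Fy y1]]; exists r0, y; split.
  move=> nE.
  have [z Fz] : exists z : 'cV[R]_n, F *m z = ones R n.
    apply: fredholm => // v Fv; apply: entry11; apply/eqP; apply: contraT => v1.
    by exfalso; apply: nE; exists v.
  set s := ((ones R n)^T *m z) 0 0.
  have qFz : qform F z = s.
    rewrite /qform -mulmxA Fz.
    have -> : z^T *m ones R n = ((ones R n)^T *m z)^T by rewrite trmx_mul trmxK.
    by rewrite mxE.
  have s0 : s != 0.
    apply/eqP => s0; have := psd_ker sF pF (etrans qFz s0); rewrite Fz.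
    by move=> /matrixP /(_ 0 0); rewrite !mxE => /eqP; rewrite oner_eq0.
  have spos : 0 < s by rewrite lt_def s0 -qFz pF.
  have PE : (r0 - s^-1) *: J + Bbar G k = F - s^-1 *: J.
    by rewrite /F scalerBl addrAC.
  exists (r0 - s^-1), z; rewrite PE; split => //.
  - by rewrite linearB /= linearZ /= trJ sF.
  - move=> x; rewrite qformB qformJ.
    set e := ((ones R n)^T *m x) 0 0.
    have := pF (x + (- (e / s)) *: z).
    rewrite qform_bil bilDl !bilDr !bilZl !bilZr -!qform_bil qFz.
    have hb : bil F z x = e.
      by rewrite /bil -sF' -trmx_mul Fz.
    rewrite hb (bilC _ _ sF') hb.
    have -> : qform F x + - (e / s) * e + (- (e / s) * e + - (e / s) * (- (e / s) * s))
      = qform F x - s^-1 * e ^+ 2 by field.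
    done.
  - rewrite mulmxBl Fz -scalemxAl /J JmxE -mulmxA (mx11_scalar ((ones R n)^T *m z)) -/s.
    by rewrite mul_mx_scalar scalerA mulVf // scale1r subrr.
set P := r *: J + Bbar G k.
have sP' : P^T = P := sP.
have Py' : P *m y = 0 := Py.
have pP' : forall x, 0 <= qform P x := pP.
have Pw : P *m w = 0 by rewrite /P mulmxDl -scalemxAl Jw scaler0 add0r Bw0.
pose K2 : 'M[R]_(1 + 1, n) := col_mx w^T y^T.
have K2P : K2 *m P = 0.
  rewrite /K2 mul_col_mx -sP' -!trmx_mul Pw Py' !trmx0.
  by apply/matrixP => a b; rewrite !mxE; case: splitP => *; rewrite mxE.
have wo : (w^T *m ones R n) 0 0 = 0 by rewrite dotC wp mxE.
set s' : R := ((ones R n)^T *m y) 0 0.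
have yo : (y^T *m ones R n) 0 0 = s' by rewrite dotC.
set N : R := (w^T *m w) 0 0.
have N0 : N != 0 by apply: contra wn0 => /eqP /sumsq_eq0 ->.
set e' : R := (y^T *m w) 0 0.
have fK2 : row_free K2.
  apply/row_freeP.
  exists (row_mx (N^-1 *: w + (- (N^-1 * e' / s')) *: ones R n)
                 (s'^-1 *: ones R n + 0 *: ones R n)).
  rewrite /K2 mul_col_row (@scalar_mx_block _ 1 1 1).
  have e11 : w^T *m (N^-1 *: w + (- (N^-1 * e' / s')) *: ones R n) = 1%:M.
    by apply/matrixP => a b; rewrite !ord1 dot_lin wo -/N [RHS]mxE /= mulr0 addr0 mulVf.
  have e21 : y^T *m (N^-1 *: w + (- (N^-1 * e' / s')) *: ones R n) = 0.
    by apply/matrixP => a b; rewrite !ord1 dot_lin yo -/e' [RHS]mxE mulNr divfK // subrr.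
  have e12 : w^T *m (s'^-1 *: ones R n + 0 *: ones R n) = 0.
    by apply/matrixP => a b; rewrite !ord1 dot_lin wo [RHS]mxE !mulr0 addr0.
  have e22 : y^T *m (s'^-1 *: ones R n + 0 *: ones R n) = 1%:M.
    by apply/matrixP => a b; rewrite !ord1 dot_lin yo [RHS]mxE /= mul0r addr0 mulVf.
  by rewrite e11 e21 e12 e22.
have rPd : (\rank P <= d)%N.
  have h0 : (K2 <= kermx P)%MS by apply/sub_kermxP.
  have h1 := mxrankS h0.
  move: fK2; rewrite /row_free => /eqP h2.
  rewrite mxrank_ker h2 in h1; rewrite /n in h1 *; lia.
have [X HX] := factor sP' pP' rPd.
have Pij : forall i j, P i j = r + (if i == j then c0 else - (if G i j then 1 else 0)).
  move=> i j; rewrite /P mxE BbarE // /J /Jmx !mxE mulr1 natbE //.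
have Pii0 : forall i, 0 <= P i i by move=> i; rewrite -bil_delta -qform_bil.
have rr0 : 0 < r + c0.
  have := Pii0 ord0; rewrite Pij eqxx le_eqVlt => /orP [/eqP E|] //.
  have q0 : qform P (delta_mx ord0 (0 : 'I_1)) = 0 by rewrite qform_bil bil_delta Pij eqxx.
  have := psd_ker sP' pP' q0 => /matrixP /(_ ord_max 0); rewrite mul_delta Pij mxE.
  have -> : (ord_max == ord0 :> 'I_n) = false by [].
  by case: (G _ _) => E'; exfalso; lra.
set a2 := Num.sqrt (2 * c0).
set a1 := Num.sqrt (2 * (c0 + 1)).
have a2pos : 0 < a2 by rewrite sqrtr_gt0; lra.
have a21 : a2 < a1 by rewrite ltr_sqrt; lra.
have ed : forall i j, i != j -> edist (row i X) (row j X) = if G i j then a1 else a2.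
  move=> i j ij; rewrite edist_rows -HX !Pij !eqxx (negPf ij).
  by case: (G i j); congr Num.sqrt; ring.
have hasE : exists i j, i != j /\ G i j.
  apply: NNPP => nE.
  have BE : Bbar G k = c0%:M.
    apply/matrixP => i j; rewrite BbarE // !mxE; case: eqP => [_|/eqP ij] /=.
      by rewrite mulr1n.
    rewrite mulr0n.
    case Gij: (G i j); last by rewrite mulr0n oppr0.
    by exfalso; apply: nE; exists i, j; rewrite Gij.
  move: Bw0; rewrite BE mul_scalar_mx => /eqP; rewrite scaler_eq0 (negPf wn0) orbF.
  by move=> /eqP c00; move: c0pos; rewrite c00 ltxx.
have hasN : exists i j, i != j /\ ~~ G i j.
  apply: NNPP => nE.
  have BE : Bbar G k = (c0 + 1)%:M - J.
    apply/matrixP => i j; rewrite BbarE // !mxE; case: eqP => [_|/eqP ij] /=.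
      by rewrite mulr1n addrK.
    rewrite mulr0n sub0r.
    by case Gij: (G i j) => //; exfalso; apply: nE; exists i, j; rewrite Gij.
  move: Bw0; rewrite BE mulmxBl Jw subr0 mul_scalar_mx => /eqP.
  rewrite scaler_eq0 (negPf wn0) orbF => /eqP c00; lra.
exists (fun i => row i X), a1, a2; split.
- split => //.
  + move=> i j Hij; apply/eqP; apply: contraT => ij.
    have := ed i j ij; rewrite Hij edist_self.
    by case: (G i j) => E; move: a21 a2pos; rewrite -E; lra.
  + by move=> i j ij; rewrite ed //; case: (G i j); [left|right].
  + by case: hasE => i [j [ij Gij]]; exists i, j; rewrite ed // Gij.
  + by case: hasN => i [j [ij Gij]]; exists i, j; rewrite ed // (negPf Gij).
- have -> : a1 = k * a2.
    rewrite /a1 /a2 -[k in RHS]ger0_norm ?(ltW (lt_trans ltr01 hk)) // -sqrtr_sqr -sqrtrM ?sqr_ge0 //.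
    by congr Num.sqrt; rewrite /c0; field.
  by rewrite mulfK // gt_eqF.
- exists 0, (Num.sqrt (r + c0)); split; first by rewrite sqrtr_gt0.
  by move=> i; rewrite edist_row0 -HX Pij eqxx.
- move=> i j ij; rewrite ed //; case: (G i j); split => // E.
  by move: a21; rewrite E ltxx.
Qed.


Theorem proposition4p1 (R : realType) (d : nat) (G : rel 'I_(d.+2))
    (Gsym : symmetric G) (Girr : irreflexive G) (k : R) (hk : 1 < k) :
  spherical_rep G k <->
  [/\ (forall w : 'cV[R]_(d.+2), perp1 w -> 0 <= qform (Bbar G k) w),
      (exists (w : 'cV[R]_(d.+2)) (gamma : R),
          [/\ w != 0, perp1 w & Bbar G k *m w = gamma *: ones R (d.+2)]),
      \det (Bbar G k) = 0 &
      (exists r0 : R, forall r : R, r0 <= r ->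
          psd (r *: Jmx R (d.+2) + Bbar G k))].
Proof.
split; first exact: forward.
by move=> [h1 h2 _ h4]; apply: backward.
Qed.
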